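(* Let $\Gamma\in\mathbb{R}^{p\times p}$ be a connected continuous-time interconnection, let $r\in\mathbb{R}^p$ satisfy $r^T\Gamma=0$, $r^T\mathbf 1=1$, and let $\Omega\in\mathbb{R}^{p\times p}$ be symmetric positive definite with $(\Gamma-\mathbf 1r^T)^T\Omega+\Omega(\Gamma-\mathbf 1r^T)=-I_p$. Then for every Riemann-integrable $Q:\mathbb{R}_{\ge0}\to\mathcal Q_n$, the solutions of $\dot x_i=Q_t\sum_{j\ne i}\gamma_{ij}(x_j-x_i)$, $i=1,\dots,p$, satisfy for all $t\ge0$ and all $i$ $$|x_i(t)-\bar x|\le\Big(\frac{\sigma_{\max}(\Omega)}{\sigma_{\min}(\Omega)}\sum_{j=1}^p|x_j(0)-\bar x|^2\Big)^{1/2},$$ where $\bar x:=(r^T\otimes I_n)\mathbf x(0)$ and $\mathbf x=[x_1^T\cdots x_p^T]^T$.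
   Context: $|\cdot|$ Euclidean norm; $\mathbf 1$ all-ones vector; $\otimes$ Kronecker product; $\sigma_{\max},\sigma_{\min}$ largest/smallest singular values; $\mathcal Q_n$ symmetric positive semidefinite $n\times n$ matrices. A continuous-time interconnection is $\Gamma=[\gamma_{ij}]$ with $\gamma_{ij}\ge0$ ($i\ne j$), $\gamma_{ii}=-\sum_{j\ne i}\gamma_{ij}$; its graph has directed edge $(n_i,n_j)$ iff $\gamma_{ij}>0$; connected means some node is reachable by a directed path from every other node. *)

(* Defs.v *)
From HB Require Import structures.
From mathcomp Require Import all_boot all_order all_algebra.
From mathcomp Require Import classical_sets boolp reals Rstruct.
From Coquelicot Require RInt Hierarchy.
From Stdlib Require Import Reals.

Set Implicit Arguments.
Unset Strict Implicit.
Unset Printing Implicit Defensive.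
Import Order.TTheory GRing.Theory Num.Theory.
Local Open Scope ring_scope.

Notation R := Rdefinitions.R.

Definition vnorm (n : nat) (v : 'cV[R]_n) : R :=
  Num.sqrt (\sum_(k < n) v k 0 ^+ 2).

Definition is_interconnection (p : nat) (G : 'M[R]_p) : Prop :=
  (forall i j : 'I_p, i != j -> 0 <= G i j) /\
  (forall i : 'I_p, G i i = - \sum_(j < p | j != i) G i j).

Definition edge (p : nat) (G : 'M[R]_p) : rel 'I_p := fun i j => 0 < G i j.

Definition connected_graph (p : nat) (G : 'M[R]_p) : Prop :=
  exists k : 'I_p, forall i : 'I_p, connect (edge G) i k.

Definition symmetric (n : nat) (A : 'M[R]_n) : Prop := A^T = A.

Definition psd (n : nat) (A : 'M[R]_n) : Prop :=
  symmetric A /\ forall v : 'cV[R]_n, 0 <= (v^T *m A *m v) 0 0.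

Definition pd (n : nat) (A : 'M[R]_n) : Prop :=
  symmetric A /\ forall v : 'cV[R]_n, v != 0 -> 0 < (v^T *m A *m v) 0 0.

Definition singular_value (n : nat) (A : 'M[R]_n) (s : R) : Prop :=
  0 <= s /\ eigenvalue (A^T *m A) (s ^+ 2).

Definition sigma_max (n : nat) (A : 'M[R]_n) : R :=
  sup [set s | singular_value A s].
Definition sigma_min (n : nat) (A : 'M[R]_n) : R :=
  inf [set s | singular_value A s].

Definition riemann_int_R (f : R -> R) : Prop :=
  forall T : R, 0 <= T -> @RInt.ex_RInt Hierarchy.R_NormedModule f 0 T.

Definition riemann_int_psd (n : nat) (Q : R -> 'M[R]_n) : Prop :=
  (forall t : R, 0 <= t -> psd (Q t)) /\
  (forall i j : 'I_n, riemann_int_R (fun t => Q t i j)).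

Definition rhs (p n : nat) (G : 'M[R]_p) (Q : R -> 'M[R]_n)
  (x : R -> 'I_p -> 'cV[R]_n) (i : 'I_p) (s : R) : 'cV[R]_n :=
  Q s *m (\sum_(j < p | j != i) G i j *: (x s j - x s i)).

(* solution on [0, oo) in integral (Caratheodory) form, with Riemann integrals *)
Definition is_solution (p n : nat) (G : 'M[R]_p) (Q : R -> 'M[R]_n)
  (x : R -> 'I_p -> 'cV[R]_n) : Prop :=
  forall (t : R), 0 <= t -> forall (i : 'I_p) (k : 'I_n),
    @RInt.ex_RInt Hierarchy.R_NormedModule (fun s => rhs G Q x i s k 0) 0 t /\
    x t i k 0 = x 0 i k 0 + @RInt.RInt Hierarchy.R_CompleteNormedModule (fun s => rhs G Q x i s k 0) 0 t.

(* xbar = (r^T (x) I_n) x(0) *)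
Definition xbar (p n : nat) (r : 'cV[R]_p) (x0 : 'I_p -> 'cV[R]_n) : 'cV[R]_n :=
  \sum_(j < p) r j 0 *: x0 j.

(* Main.v *)
Require Import Defs.
From HB Require Import structures.
From mathcomp Require Import all_boot all_order all_algebra.
From mathcomp Require Import classical_sets boolp reals Rstruct.
From mathcomp Require Import functions topology normedtype derive Rstruct_topology.
From Coquelicot Require Coquelicot.
From mathcomp Require Import lra ring.
Set Implicit Arguments.
Unset Strict Implicit.
Unset Printing Implicit Defensive.
Import Order.TTheory GRing.Theory Num.Theory.
Import numFieldNormedType.Exports.
Local Open Scope classical_set_scope.
Local Open Scope ring_scope.

Lemma cont_sum (T : topologicalType) (I : Type) (s : seq I) (f : I -> T -> R) :
  (forall i, continuous (f i)) -> continuous (fun x => \sum_(i <- s) f i x).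
Proof.
move=> hf; elim: s => [|a s IH].
  have -> : (fun x : T => \sum_(i <- [::]) f i x) = fun=> 0 by apply/funext=> x; rewrite big_nil.
  exact: cst_continuous.
have -> : (fun x : T => \sum_(i <- a :: s) f i x) = (f a + (fun x => \sum_(i <- s) f i x))%R.
  by apply/funext=> x; rewrite big_cons.
move=> x; apply: (@continuousD _ R^o); [exact: hf|exact: IH].
Qed.

Definition qf (p : nat) (A : 'M[R]_p) (u : 'rV[R]_p) : R := (u *m A *m u^T) 0 0.
Definition nsq (p : nat) (u : 'rV[R]_p) : R := (u *m u^T) 0 0.


Lemma qfE p (A : 'M[R]_p) u : qf A u = \sum_(i < p) \sum_(j < p) u 0 i * A i j * u 0 j.
Proof.
rewrite /qf !mxE.
rewrite (eq_bigr (fun j => (\sum_k u 0 k * A k j) * u 0 j)); last first.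
  by move=> j _; rewrite !mxE; congr (_ * _); apply: eq_bigr => k _; rewrite mxE.
rewrite exchange_big; apply: eq_bigr => i _; rewrite big_distrl /=.
by apply: eq_bigr => j _.
Qed.

Lemma nsqE p (u : 'rV[R]_p) : nsq u = \sum_(i < p) u 0 i ^+ 2.
Proof. by rewrite /nsq mxE; apply: eq_bigr => i _; rewrite mxE expr2. Qed.

Lemma cont_qf p (A : 'M[R]_p) : continuous (qf A).
Proof.
have -> : qf A = fun u => \sum_(i <- index_enum 'I_p) \sum_(j <- index_enum 'I_p) u 0 i * A i j * u 0 j.
  by apply/funext => u; rewrite qfE.
apply: cont_sum => i; apply: cont_sum => j.
move=> u.
have -> : (fun u : 'rV[R]_p => u 0 i * A i j * u 0 j) = ((fun u : 'rV[R]_p => u 0 i) \* (fun=> A i j)) \* (fun u : 'rV[R]_p => u 0 j).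
  by [].
apply: (@continuousM R).
  apply: (@continuousM R); first exact: coord_continuous.
  exact: cst_continuous.
exact: coord_continuous.
Qed.

Lemma cont_nsq p : continuous (@nsq p).
Proof.
have -> : @nsq p = qf 1%:M.
  by apply/funext => u; rewrite /nsq /qf mulmx1.
exact: cont_qf.
Qed.


Lemma sphere_max p (A : 'M[R]_p) : (0 < p)%N ->
  exists2 u, nsq u = 1 & forall v, nsq v = 1 -> qf A v <= qf A u.
Proof.
move=> p0.
pose S := [set u : 'rV[R]_p | nsq u = 1].
have S0 : S !=set0.
  exists (delta_mx 0 (Ordinal p0)); rewrite /S /= nsqE (bigD1 (Ordinal p0)) //= big1.
    by rewrite !mxE !eqxx /= expr1n addr0.
  by move=> i /negbTE hi; rewrite mxE hi andbF expr0n.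
have Scl : closed S.
  have := proj1 (continuous_closedP _) (@cont_nsq p) [set x | x = 1]. apply. exact: closed_eq.
have Sb : bounded_set S.
  exists 1; split => // x x1 v Sv.
  rewrite /Num.norm /= mx_normrE; apply: bigmax_le; first lra.
  move=> [i j] _ /=; rewrite (ord1 i).
  have h : v 0 j ^+ 2 <= 1.
    rewrite -Sv nsqE (bigD1 j) //= lerDl; apply: sumr_ge0 => k _; exact: sqr_ge0.
  have : `|v 0 j| <= 1 by apply/ler_normlP; split; nra.
  lra.
have Sc : compact S by exact: bounded_closed_compact.
have [c cS cmax] := compact_EVT_max S0 Sc (continuous_subspaceT (@cont_qf p A)).
exists c; first by move: cS; rewrite inE.
by move=> v hv; apply: cmax; rewrite inE.
Qed.

Definition bf (p : nat) (A : 'M[R]_p) (u w : 'rV[R]_p) : R := (u *m A *m w^T) 0 0.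

Lemma bfDl p (A : 'M[R]_p) u v w : bf A (u + v) w = bf A u w + bf A v w.
Proof. by rewrite /bf !mulmxDl mxE. Qed.
Lemma bfDr p (A : 'M[R]_p) u v w : bf A w (u + v) = bf A w u + bf A w v.
Proof. by rewrite /bf linearD /= mulmxDr mxE. Qed.
Lemma bfZl p (A : 'M[R]_p) c u w : bf A (c *: u) w = c * bf A u w.
Proof. by rewrite /bf -!scalemxAl mxE. Qed.
Lemma bfZr p (A : 'M[R]_p) c u w : bf A w (c *: u) = c * bf A w u.
Proof. by rewrite /bf linearZ /= -scalemxAr mxE. Qed.
Lemma bf_tr p (A : 'M[R]_p) u w : bf A w u = bf A^T u w.
Proof.
rewrite /bf -[in LHS](trmxK (w *m A *m u^T)) mxE.
by rewrite !trmx_mul trmxK mulmxA.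
Qed.
Lemma qf_bf p (A : 'M[R]_p) u : qf A u = bf A u u.
Proof. by []. Qed.
Lemma nsq_bf p (u : 'rV[R]_p) : nsq u = bf 1%:M u u.
Proof. by rewrite /nsq /bf mulmx1. Qed.
Lemma nsq_ge0 p (u : 'rV[R]_p) : 0 <= nsq u.
Proof. rewrite nsqE; apply: sumr_ge0 => i _; exact: sqr_ge0. Qed.
Lemma nsq_eq0 p (u : 'rV[R]_p) : nsq u = 0 -> u = 0.
Proof.
rewrite nsqE => /eqP; rewrite psumr_eq0 => [/allP h|i _]; last exact: sqr_ge0.
apply/rowP => i; rewrite mxE; apply/eqP; rewrite -sqrf_eq0.
by have := h i; rewrite mem_index_enum => /(_ isT) /implyP; apply.
Qed.

Lemma qfZ p (A : 'M[R]_p) c u : qf A (c *: u) = c ^+ 2 * qf A u.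
Proof. by rewrite !qf_bf bfZl bfZr mulrA expr2. Qed.
Lemma nsqZ p c (u : 'rV[R]_p) : nsq (c *: u) = c ^+ 2 * nsq u.
Proof. by rewrite !nsq_bf bfZl bfZr mulrA expr2. Qed.

Lemma rayleigh_max p (A : 'M[R]_p) : (0 < p)%N -> A^T = A ->
  exists u, [/\ nsq u = 1, u *m A = qf A u *: u &
                forall v, qf A v <= qf A u * nsq v].
Proof.
move=> p0 sA; have [u u1 umax] := sphere_max A p0.
set l := qf A u.
have hle : forall v, qf A v <= l * nsq v.
  move=> v; have [v0|vn0] := eqVneq (nsq v) 0.
    by rewrite v0 mulr0 (nsq_eq0 v0) /qf !mul0mx mxE.
  have sp : 0 < nsq v by rewrite lt_def vn0 nsq_ge0.
  set c := (Num.sqrt (nsq v))^-1.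
  have c2 : c ^+ 2 * nsq v = 1.
    by rewrite /c exprVn sqr_sqrtr ?nsq_ge0 // mulVf.
  have c2p : 0 < c ^+ 2 by rewrite exprn_gt0 // invr_gt0 sqrtr_gt0.
  have := umax (c *: v); rewrite nsqZ qfZ => /(_ c2) h.
  rewrite -(ler_pM2l c2p) mulrCA c2 mulr1; exact: h.
exists u; split => //.
pose z := u *m A - l *: u.
have key : forall e : R, 2 * e * nsq z + e ^+ 2 * (qf A z - l * nsq z) <= 0.
  move=> e; have := hle (u + e *: z).
  rewrite qf_bf nsq_bf !bfDl !bfDr !bfZl !bfZr.
  have e1 : bf A z u = bf A u z by rewrite bf_tr sA.
  have e2 : bf 1%:M z u = bf 1%:M u z by rewrite bf_tr trmx1.
  have e3 : bf A u z - l * bf 1%:M u z = nsq z.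
    rewrite /bf /nsq mulmx1 {3}/z mulmxBl -scalemxAl.
    by rewrite !mxE.
  rewrite e1 e2 -qf_bf -nsq_bf u1 -/l -qf_bf -nsq_bf.
  move: e3; set a := bf A u z; set b := bf 1%:M u z => e3.
  move=> h; rewrite -e3; nra.
have zp := nsq_ge0 z.
have : nsq z <= 0.
  set C := qf A z - l * nsq z.
  have := key (nsq z / (`|C| + 1)).
  have Cp : 0 < `|C| + 1 by rewrite ltr_pwDr // normr_ge0.
  move=> h; rewrite -/C in h; rewrite leNgt; apply/negP => zpos.
  have : 2 * (nsq z / (`|C| + 1)) * nsq z + (nsq z / (`|C| + 1)) ^+ 2 * C > 0.
    set t := nsq z / (`|C| + 1).
    have tp : 0 < t by rewrite divr_gt0.
    have tC : t * (`|C| + 1) = nsq z by rewrite /t mulfVK // gt_eqF.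
    have : - `|C| <= C by have := ler_norm (- C); rewrite normrN; lra.
    nra.
  lra.
move=> hz; have /nsq_eq0 : nsq z = 0 by apply/eqP; rewrite eq_le hz zp.
by move/eqP; rewrite subr_eq0 => /eqP.
Qed.

Lemma nsq1_neq0 p (u : 'rV[R]_p) : nsq u = 1 -> u != 0.
Proof. by move=> h; apply/eqP => u0; move: h; rewrite u0 /nsq mul0mx mxE => /eqP; rewrite eq_sym oner_eq0. Qed.

Lemma pd_qf p (Om : 'M[R]_p) u : pd Om -> u != 0 -> 0 < qf Om u.
Proof.
move=> [_ hpd] u0; have := hpd u^T; rewrite trmxK /qf; apply.
by apply: contra u0 => /eqP h; rewrite -(trmxK u) h trmx0.
Qed.

Lemma qf_eig p (A : 'M[R]_p) u a : u *m A = a *: u -> qf A u = a * nsq u.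
Proof. by move=> h; rewrite /qf h -scalemxAl mxE. Qed.

Lemma qfN p (A : 'M[R]_p) u : qf (- A) u = - qf A u.
Proof. by rewrite /qf mulmxN mulNmx mxE. Qed.

Lemma spectral_bounds p (Om : 'M[R]_p) : (0 < p)%N -> pd Om ->
  [/\ 0 < sigma_min Om, (forall v, sigma_min Om * nsq v <= qf Om v) &
      (forall v, qf Om v <= sigma_max Om * nsq v)].
Proof.
move=> p0 hpd; have sO : Om^T = Om by case: hpd.
have [u1 [n1 e1 h1]] := rayleigh_max p0 sO.
have sN : (- Om)^T = - Om by rewrite linearN /= sO.
have [u2 [n2 e2 h2]] := rayleigh_max p0 sN.
set lM := qf Om u1 in e1 h1; set lm := qf Om u2.
have e2' : u2 *m Om = lm *: u2.
  by move: e2; rewrite qfN mulmxN scaleNr => /eqP; rewrite eqr_opp => /eqP.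
have h2' : forall v, lm * nsq v <= qf Om v.
  by move=> v; have := h2 v; rewrite !qfN mulNr lerN2.
have lmp : 0 < lm by apply: pd_qf => //; exact: nsq1_neq0.
have lMp : 0 < lM by apply: pd_qf => //; exact: nsq1_neq0.
pose S := [set s | singular_value Om s].
have eigS : forall u l, nsq u = 1 -> 0 <= l -> u *m Om = l *: u -> S l.
  move=> u l nu l0 eu; split => //; apply/eigenvalueP; exists u; last exact: nsq1_neq0.
  by rewrite sO mulmxA eu -scalemxAl eu scalerA expr2.
have SM : S lM by apply: (eigS u1) => //; exact: ltW.
have Sm : S lm by apply: (eigS u2) => //; exact: ltW.
have sO2 : (Om^T *m Om)^T = Om^T *m Om by rewrite trmx_mul trmxK.
have [w1 [nw1 _ hw1]] := rayleigh_max p0 sO2.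
have sN2 : (- (Om^T *m Om))^T = - (Om^T *m Om) by rewrite linearN /= sO2.
have [w2 [nw2 _ hw2]] := rayleigh_max p0 sN2.
set mu := qf (Om^T *m Om) w1 in hw1.
set nu := qf (Om^T *m Om) w2.
have hw2' : forall v, nu * nsq v <= qf (Om^T *m Om) v.
  by move=> v; have := hw2 v; rewrite !qfN mulNr lerN2.
have nup : 0 < nu.
  rewrite /nu /qf.
  have -> : w2 *m (Om^T *m Om) *m w2^T = (w2 *m Om) *m (w2 *m Om)^T.
    by rewrite trmx_mul sO !mulmxA.
  have : w2 *m Om != 0.
    apply/eqP => h; have := pd_qf hpd (nsq1_neq0 nw2).
    by rewrite /qf h mul0mx mxE ltxx.
  move=> hz; rewrite -/(nsq (w2 *m Om)) lt_def nsq_ge0 andbT.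
  by apply/eqP => /nsq_eq0 /eqP; apply/negP.
have Sbnd : forall s, S s -> nu <= s ^+ 2 <= mu.
  move=> s [s0 /eigenvalueP [v ev vn0]].
  have nvp : 0 < nsq v.
    rewrite lt_def nsq_ge0 andbT; apply/eqP => /nsq_eq0 /eqP; exact/negP.
  have qv := qf_eig ev.
  have := hw1 v; have := hw2' v; rewrite qv => a b.
  apply/andP; split.
    by rewrite -(ler_pM2r nvp).
  by rewrite -(ler_pM2r nvp).
have hsup : has_sup S.
  split; first by exists lM.
  exists (1 + mu) => s Ss; have /andP [_ h] := Sbnd s Ss.
  case: Ss => s0 _; have nu0 := ltW nup; nra.
have hinf : has_lbound S by exists 0 => s [s0 _].
have Sne : S !=set0 by exists lm.
have c0 : lbound S (nu / (1 + nu)).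
  move=> s Ss; have /andP [h _] := Sbnd s Ss; case: Ss => s0 _.
  have p1 : 0 < 1 + nu by lra.
  rewrite ler_pdivrMr //; nra.
have supM : lM <= sigma_max Om by exact: sup_upper_bound.
have infm : sigma_min Om <= lm by exact: ge_inf.
have infp : nu / (1 + nu) <= sigma_min Om by exact: lb_le_inf.
split.
- apply: lt_le_trans infp; apply: divr_gt0 => //; lra.
- move=> v; apply: le_trans (h2' v); apply: ler_wpM2r; [exact: nsq_ge0|exact: infm].
- move=> v; apply: le_trans (h1 v) _; apply: ler_wpM2r; [exact: nsq_ge0|exact: supM].
Qed.

Definition Iex (f : R -> R) (a b : R) := @RInt.ex_RInt Hierarchy.R_NormedModule f a b.
Definition Iv (f : R -> R) (a b : R) := @RInt.RInt Hierarchy.R_CompleteNormedModule f a b.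

Lemma Iex_add f g a b : Iex f a b -> Iex g a b -> Iex (fun s => f s + g s) a b.
Proof. exact: RInt.ex_RInt_plus. Qed.
Lemma Iv_add f g a b : Iex f a b -> Iex g a b -> Iv (fun s => f s + g s) a b = Iv f a b + Iv g a b.
Proof. move=> hf hg; exact: (@RInt.RInt_plus Hierarchy.R_CompleteNormedModule f g a b hf hg). Qed.
Lemma Iex_scal f c a b : Iex f a b -> Iex (fun s => c * f s) a b.
Proof. exact: RInt.ex_RInt_scal. Qed.
Lemma Iv_scal f c a b : Iex f a b -> Iv (fun s => c * f s) a b = c * Iv f a b.
Proof. move=> hf; exact: (@RInt.RInt_scal Hierarchy.R_CompleteNormedModule f a b c hf). Qed.
Lemma Iex_cst c a b : Iex (fun=> c) a b.
Proof. exact: RInt.ex_RInt_const. Qed.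
Lemma Iv_0 a b : Iv (fun=> 0) a b = 0.
Proof.
rewrite /Iv RInt.RInt_const /Hierarchy.scal /= /Hierarchy.mult /=.
by rewrite RmultE mulr0.
Qed.
Lemma Iex_opp f a b : Iex f a b -> Iex (fun s => - f s) a b.
Proof. exact: RInt.ex_RInt_opp. Qed.
Lemma Iv_opp f a b : Iex f a b -> Iv (fun s => - f s) a b = - Iv f a b.
Proof. move=> hf; exact: (@RInt.RInt_opp Hierarchy.R_CompleteNormedModule f a b hf). Qed.
Lemma Iex_sub f g a b : Iex f a b -> Iex g a b -> Iex (fun s => f s - g s) a b.
Proof. by move=> hf hg; apply: Iex_add => //; exact: Iex_opp. Qed.
Lemma Iv_sub f g a b : Iex f a b -> Iex g a b -> Iv (fun s => f s - g s) a b = Iv f a b - Iv g a b.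
Proof. by move=> hf hg; rewrite Iv_add ?Iv_opp //; exact: Iex_opp. Qed.

Lemma Iex_sum (I : Type) (l : seq I) (F : I -> R -> R) a b :
  (forall i, Iex (F i) a b) -> Iex (fun s => \sum_(i <- l) F i s) a b.
Proof.
move=> hF; elim: l => [|i l IH].
  have -> : (fun s => \sum_(i <- [::]) F i s) = fun=> 0 by apply/funext => s; rewrite big_nil.
  exact: Iex_cst.
have -> : (fun s => \sum_(j <- i :: l) F j s) = fun s => F i s + \sum_(j <- l) F j s.
  by apply/funext => s; rewrite big_cons.
exact: Iex_add.
Qed.

Lemma Iv_sum (I : Type) (l : seq I) (F : I -> R -> R) a b :
  (forall i, Iex (F i) a b) -> Iv (fun s => \sum_(i <- l) F i s) a b = \sum_(i <- l) Iv (F i) a b.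
Proof.
move=> hF; elim: l => [|i l IH].
  have -> : (fun s => \sum_(i <- [::]) F i s) = fun=> 0 by apply/funext => s; rewrite big_nil.
  by rewrite Iv_0 big_nil.
have -> : (fun s => \sum_(j <- i :: l) F j s) = fun s => F i s + \sum_(j <- l) F j s.
  by apply/funext => s; rewrite big_cons.
by rewrite Iv_add ?IH ?big_cons //; exact: Iex_sum.
Qed.

Lemma Iex_sub_int f a b c d : a <= c -> c <= d -> d <= b -> Iex f a b -> Iex f c d.
Proof.
move=> ac cd db h.
have h1 : Iex f a d.
  apply: (@RInt.ex_RInt_Chasles_1 Hierarchy.R_CompleteNormedModule f a d b) => //.
  by split; apply/RleP; [exact: le_trans cd|].
apply: (@RInt.ex_RInt_Chasles_2 Hierarchy.R_CompleteNormedModule f a c d) => //.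
by split; apply/RleP.
Qed.

Lemma Iv_chasles f a b c : Iex f a b -> Iex f b c -> Iv f a b + Iv f b c = Iv f a c.
Proof. move=> h1 h2; exact: (@RInt.RInt_Chasles Hierarchy.R_CompleteNormedModule f a b c h1 h2). Qed.

Lemma Iv_bound f a b M : a <= b -> Iex f a b -> (forall t, a <= t <= b -> `|f t| <= M) ->
  `|Iv f a b| <= (b - a) * M.
Proof.
move=> ab hf hM; rewrite -RabsE; apply/RleP.
apply: RInt.abs_RInt_le_const => //; first exact/RleP.
move=> t [h1 h2]; rewrite RabsE; apply/RleP; apply: hM; apply/andP; split; exact/RleP.
Qed.

Lemma Iv_le0 f a b : a <= b -> Iex f a b -> (forall t, a <= t <= b -> f t <= 0) -> Iv f a b <= 0.
Proof.
move=> ab hf h; rewrite -(Iv_0 a b); apply/RleP.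
apply: RInt.RInt_le => //; first exact/RleP; first exact: Iex_cst.
move=> t [h1 h2]; apply/RleP; apply: h; apply/andP; split; apply/ltW; exact/RltP.
Qed.

Lemma Iex_bound f a b : a <= b -> Iex f a b -> exists M, forall t, a <= t <= b -> `|f t| <= M.
Proof.
move=> ab hf; have [M hM] := @RInt.ex_RInt_ub Hierarchy.R_NormedModule f a b hf.
exists M => t /andP [h1 h2]; rewrite -RabsE; apply/RleP.
have := hM t; rewrite /Hierarchy.norm /= /Hierarchy.abs /=; apply.
by rewrite RminE RmaxE; split; apply/RleP; rewrite ?ge_min ?le_max ?h1 ?h2 ?orbT.
Qed.

Definition mxbound (m n : nat) (A : 'M[R]_(m, n)) (c : R) := forall i j, `|A i j| <= c.

Lemma mxbound_mul m k n (A : 'M[R]_(m, k)) (B : 'M[R]_(k, n)) a b :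
  mxbound A a -> mxbound B b -> mxbound (A *m B) (k%:R * (a * b)).
Proof.
move=> hA hB i j; rewrite mxE.
apply: le_trans (ler_norm_sum _ _ _) _.
rewrite -[k in k%:R]card_ord -sum1_card natr_sum big_distrl /=.
apply: ler_sum => l _; rewrite mul1r normrM.
by apply: ler_pM; rewrite ?normr_ge0 ?hA ?hB.
Qed.

Lemma mxbound_tr n (A : 'M[R]_n) a : mxbound A a -> `|\tr A| <= n%:R * a.
Proof.
move=> hA; rewrite /mxtrace; apply: le_trans (ler_norm_sum _ _ _) _.
rewrite -[n in n%:R]card_ord -sum1_card natr_sum big_distrl /=.
by apply: ler_sum => l _; rewrite mul1r.
Qed.

Lemma mxbound_trmx m n (A : 'M[R]_(m, n)) a : mxbound A a -> mxbound A^T a.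
Proof. by move=> h i j; rewrite mxE. Qed.

Lemma mxbound_ex m n (A : 'M[R]_(m, n)) : exists a, 0 <= a /\ mxbound A a.
Proof.
exists (\sum_i \sum_j `|A i j|); split.
  by apply: sumr_ge0 => i _; apply: sumr_ge0 => j _; exact: normr_ge0.
move=> i j; rewrite (bigD1 i) //= (bigD1 j) //= -addrA lerDl.
apply: addr_ge0; first by apply: sumr_ge0 => l _; exact: normr_ge0.
by apply: sumr_ge0 => l _; apply: sumr_ge0 => l' _; exact: normr_ge0.
Qed.

Lemma fin_bound (I : finType) (P : I -> R -> Prop) :
  (forall i M M', M <= M' -> P i M -> P i M') -> (forall i, exists M, P i M) ->
  exists M, 0 <= M /\ forall i, P i M.
Proof.
move=> mono h; have [f hf] := boolp.choice h.
exists (\sum_i `|f i|); split; first by apply: sumr_ge0 => i _; exact: normr_ge0.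
move=> i; apply: mono (hf i).
apply: le_trans (ler_norm _) _; rewrite (bigD1 i) //= lerDl.
by apply: sumr_ge0 => l _; exact: normr_ge0.
Qed.

Definition MIv m n (H : R -> 'M[R]_(m, n)) a b : 'M[R]_(m, n) :=
  \matrix_(k, i) Iv (fun s => H s k i) a b.

Lemma tr_mulE m n (M : 'M[R]_(m, n)) (W : 'M[R]_(n, m)) :
  \tr (M *m W) = \sum_(k <- index_enum 'I_m) \sum_(i <- index_enum 'I_n) W i k * M k i.
Proof.
rewrite /mxtrace; apply: eq_bigr => k _; rewrite mxE; apply: eq_bigr => i _; exact: mulrC.
Qed.

Lemma tr_Iv m n (H : R -> 'M[R]_(m, n)) (W : 'M[R]_(n, m)) a b :
  (forall k i, Iex (fun s => H s k i) a b) ->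
  Iex (fun s => \tr (H s *m W)) a b /\
  \tr (MIv H a b *m W) = Iv (fun s => \tr (H s *m W)) a b.
Proof.
move=> hH.
have -> : (fun s => \tr (H s *m W)) =
   fun s => \sum_(k <- index_enum 'I_m) \sum_(i <- index_enum 'I_n) W i k * H s k i.
  by apply/funext => s; rewrite tr_mulE.
have hex : forall k, Iex (fun s => \sum_(i <- index_enum 'I_n) W i k * H s k i) a b.
  by move=> k; apply: Iex_sum => i; apply: Iex_scal.
split; first by apply: Iex_sum.
rewrite tr_mulE Iv_sum //; apply: eq_bigr => k _.
rewrite Iv_sum; last by move=> i; apply: Iex_scal.
by apply: eq_bigr => i _; rewrite Iv_scal // mxE.
Qed.

Lemma Iex_lin m n (Q : R -> 'M[R]_(m, n)) (c : 'I_n -> R) a b k :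
  (forall i j, Iex (fun s => Q s i j) a b) ->
  Iex (fun s => \sum_j Q s k j * c j) a b.
Proof.
move=> hQ; apply: Iex_sum => j.
have -> : (fun s => Q s k j * c j) = fun s => c j * Q s k j by apply/funext => s; exact: mulrC.
exact: Iex_scal.
Qed.

Lemma tr_psd m n (Qs : 'M[R]_n) (X : 'M[R]_(n, m)) : psd Qs -> 0 <= \tr (X^T *m Qs *m X).
Proof.
move=> [_ hQ]; rewrite /mxtrace; apply: sumr_ge0 => i _.
have -> : (X^T *m Qs *m X) i i = ((col i X)^T *m Qs *m col i X) 0 0.
  rewrite !mxE; apply: eq_bigr => b _; rewrite !mxE; congr (_ * _); apply: eq_bigr => a _; rewrite !mxE //.
exact: hQ.
Qed.

Lemma lyap_pt p n (G : 'M[R]_p) (r : 'cV[R]_p) (Om : 'M[R]_p) (Qs : 'M[R]_n) (X : 'M[R]_(n, p)) :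
  Om^T = Om -> psd Qs -> X *m r = 0 ->
  (G - const_mx 1 *m r^T)^T *m Om + Om *m (G - const_mx 1 *m r^T) = - 1%:M ->
  2 * \tr (Qs *m X *m G^T *m (Om *m X^T)) = - \tr (X^T *m Qs *m X).
Proof.
move=> sO hQ Xr hL; have sQ : Qs^T = Qs by case: hQ.
set L := G - const_mx 1 *m r^T in hL.
have eG : X *m G^T = X *m L^T.
  rewrite /L linearB /= trmx_mul trmxK mulmxBr mulmxA Xr mul0mx subr0 //.
rewrite -[Qs *m X *m G^T]mulmxA eG !mulmxA.
set Z := Qs *m X *m L^T *m Om *m X^T.
have hZ : \tr Z = \tr (Qs *m X *m (Om *m L) *m X^T).
  rewrite -mxtrace_tr /Z !trmx_mul !trmxK sO sQ.
  rewrite !mulmxA mxtrace_mulC !mulmxA //.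
have -> : 2 * \tr Z = \tr (Qs *m X *m (L^T *m Om + Om *m L) *m X^T).
  rewrite mulr2n mulrDl mul1r {2}hZ -mxtraceD /Z mulmxDr mulmxDl !mulmxA //.
by rewrite hL mulmxN mulmx1 mulNmx raddfN /= mxtrace_mulC mulmxA.
Qed.

Definition Xm p n (x : R -> 'I_p -> 'cV[R]_n) (r : 'cV[R]_p) (t : R) : 'M[R]_(n, p) :=
  \matrix_(k, i) (x t i k 0 - xbar r (x 0) k 0).

Lemma rhs_F p n (G : 'M[R]_p) (Q : R -> 'M[R]_n) (r : 'cV[R]_p) x i s k :
  is_interconnection G ->
  rhs G Q x i s k 0 = (Q s *m Xm x r s *m G^T) k i.
Proof.
move=> [_ hd]; rewrite /rhs -mulmxA !mxE; apply: eq_bigr => a _; congr (_ * _).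
rewrite summxE [X in _ = X]mxE [RHS](bigD1 i) //= !mxE hd mulrN big_distrr /= addrC -sumrB.
apply: eq_bigr => j _; rewrite !mxE.
set xb := xbar r (x 0) a 0; lra.
Qed.

Definition Fm p n (G : 'M[R]_p) (Q : R -> 'M[R]_n) x (r : 'cV[R]_p) (s : R) : 'M[R]_(n, p) :=
  Q s *m Xm x r s *m G^T.

Lemma sol_X p n (G : 'M[R]_p) (Q : R -> 'M[R]_n) (r : 'cV[R]_p) x :
  is_interconnection G -> is_solution G Q x -> forall t, 0 <= t -> forall k i,
  Iex (fun s => Fm G Q x r s k i) 0 t /\
  Xm x r t k i = Xm x r 0 k i + Iv (fun s => Fm G Q x r s k i) 0 t.
Proof.
move=> hG hx t t0 k i; have [h1 h2] := hx t t0 i k.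
have e : (fun s => rhs G Q x i s k 0) = (fun s => Fm G Q x r s k i).
  by apply/funext => s; rewrite (@rhs_F _ _ G Q r x i s k hG).
rewrite -e; split; first exact: h1.
by rewrite !mxE h2 /Iv; lra.
Qed.

Lemma incr_X p n (G : 'M[R]_p) (Q : R -> 'M[R]_n) (r : 'cV[R]_p) x :
  is_interconnection G -> is_solution G Q x -> forall a b, 0 <= a -> a <= b -> forall k i,
  Iex (fun s => Fm G Q x r s k i) a b /\
  Xm x r b k i - Xm x r a k i = Iv (fun s => Fm G Q x r s k i) a b.
Proof.
move=> hG hx a b a0 ab k i.
have b0 : 0 <= b by exact: le_trans ab.
have [hb eb] := sol_X r hG hx b0 k i.
have [ha ea] := sol_X r hG hx a0 k i.
have hab : Iex (fun s => Fm G Q x r s k i) a b by exact: Iex_sub_int hb.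
split => //; rewrite eb ea -(Iv_chasles ha hab); lra.
Qed.

Lemma Xr0 p n (G : 'M[R]_p) (Q : R -> 'M[R]_n) (r : 'cV[R]_p) x :
  is_interconnection G -> is_solution G Q x ->
  r^T *m G = 0 -> r^T *m const_mx 1 = 1 ->
  forall t, 0 <= t -> Xm x r t *m r = 0.
Proof.
move=> hG hx hr1 hr2 t t0; apply/matrixP => k j; rewrite (ord1 j) !mxE.
have hsum : \sum_i r i 0 = 1.
  have := congr1 (fun M : 'M[R]_1 => M 0 0) hr2; rewrite !mxE /= => h; rewrite -[RHS]h.
  by apply: eq_bigr => i _; rewrite !mxE mulr1.
have e : \sum_i Xm x r t k i * r i 0 =
    \sum_i Xm x r 0 k i * r i 0 + Iv (fun s => \sum_(i <- index_enum 'I_p) r i 0 * Fm G Q x r s k i) 0 t.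
  rewrite Iv_sum; last by move=> i; apply: Iex_scal; case: (sol_X r hG hx t0 k i).
  rewrite -big_split /=; apply: eq_bigr => i _.
  have [_ ->] := sol_X r hG hx t0 k i; rewrite Iv_scal; last by case: (sol_X r hG hx t0 k i).
  by rewrite mulrDl; congr (_ + _); exact: mulrC.
rewrite e.
have -> : (fun s => \sum_(i <- index_enum 'I_p) r i 0 * Fm G Q x r s k i) = fun=> 0.
  apply/funext => s.
  have : (Fm G Q x r s *m r) k 0 = 0.
    have e2 : G^T *m r = (r^T *m G)^T by rewrite trmx_mul trmxK.
    by rewrite /Fm -mulmxA e2 hr1 trmx0 mulmx0 mxE.
  rewrite mxE => h; rewrite -[RHS]h; apply: eq_bigr => i _; exact: mulrC.
rewrite Iv_0 addr0.
under eq_bigr do rewrite mxE mulrBl.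
rewrite sumrB -big_distrr /= hsum mulr1.
have -> : xbar r (x 0) k 0 = \sum_i x 0 i k 0 * r i 0.
  by rewrite /xbar summxE; apply: eq_bigr => i _; rewrite mxE mulrC.
by rewrite subrr.
Qed.

Lemma mxE_sub m n (A B : 'M[R]_(m, n)) i j : (A - B) i j = A i j - B i j.
Proof. by rewrite !mxE. Qed.
Lemma mxE_add m n (A B : 'M[R]_(m, n)) i j : (A + B) i j = A i j + B i j.
Proof. by rewrite !mxE. Qed.

Definition Vf p n (Om : 'M[R]_p) (x : R -> 'I_p -> 'cV[R]_n) (r : 'cV[R]_p) t : R :=
  \tr (Xm x r t *m Om *m (Xm x r t)^T).

Lemma V_expand p n (Om : 'M[R]_p) (A D : 'M[R]_(n, p)) : Om^T = Om ->
  \tr ((A + D) *m Om *m (A + D)^T) - \tr (A *m Om *m A^T) =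
  2 * \tr (D *m (Om *m A^T)) + \tr (D *m Om *m D^T).
Proof.
move=> sO.
have e : \tr (A *m Om *m D^T) = \tr (D *m (Om *m A^T)).
  rewrite -mxtrace_tr !trmx_mul trmxK sO mulmxA //.
rewrite linearD /= !mulmxDr !mulmxDl !mxtraceD e mulmxA.
rewrite -!mulmxA.
set u := \tr (A *m (Om *m A^T)); set v := \tr (D *m (Om *m A^T)); set w := \tr (D *m (Om *m D^T)).
lra.
Qed.

Lemma local_est p n (G : 'M[R]_p) (r : 'cV[R]_p) (Om : 'M[R]_p) (Q : R -> 'M[R]_n) x :
  is_interconnection G -> is_solution G Q x ->
  r^T *m G = 0 -> r^T *m const_mx 1 = 1 -> Om^T = Om ->
  (G - const_mx 1 *m r^T)^T *m Om + Om *m (G - const_mx 1 *m r^T) = - 1%:M ->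
  riemann_int_psd Q ->
  forall T, 0 <= T -> exists C, forall a b, 0 <= a -> a <= b -> b <= T ->
    Vf Om x r b - Vf Om x r a <= C * (b - a) ^+ 2.
Proof.
move=> hG hx hr1 hr2 sO hL [hQpsd hQint] T T0.
pose X := Xm x r; pose F := Fm G Q x r.
have [M [M0 hM]] : exists M, 0 <= M /\ forall ki : 'I_n * 'I_p,
    forall s, 0 <= s <= T -> `|F s ki.1 ki.2| <= M.
  apply: fin_bound.
    by move=> ki M1 M2 h12 h s hs; apply: le_trans (h s hs) h12.
  move=> [k i]; have [hi _] := sol_X r hG hx T0 k i.
  exact: Iex_bound T0 hi.
have FM : forall s, 0 <= s <= T -> mxbound (F s) M.
  by move=> s hs k i; exact: (hM (k, i) s hs).
have [K [K0 hK]] : exists K, 0 <= K /\ forall ij : 'I_n * 'I_n,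
    forall s, 0 <= s <= T -> `|Q s ij.1 ij.2| <= K.
  apply: fin_bound.
    by move=> ki M1 M2 h12 h s hs; apply: le_trans (h s hs) h12.
  move=> [k i]; exact: Iex_bound T0 (hQint k i T T0).
have QK : forall s, 0 <= s <= T -> mxbound (Q s) K.
  by move=> s hs k i; exact: (hK (k, i) s hs).
have incr : forall a b, 0 <= a -> a <= b -> b <= T -> mxbound (X b - X a) ((b - a) * M).
  move=> a b a0 ab bT k i; rewrite mxE_sub /X.
  have [hab ->] := incr_X r hG hx a0 ab k i.
  apply: Iv_bound => // s /andP [h1 h2]; apply: FM; apply/andP; split.
    exact: le_trans h1.
  exact: le_trans bT.
have [E0 [E00 hE0]] := mxbound_ex (X 0).
pose E := E0 + T * M.
have XE : forall s, 0 <= s <= T -> mxbound (X s) E.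
  move=> s /andP [s0 sT] k i.
  have h1 := incr 0 s (lexx 0) s0 sT k i; rewrite mxE_sub subr0 in h1.
  have h2 := hE0 k i.
  have h3 : s * M <= T * M by apply: ler_wpM2r.
  have := ler_normD (X s k i - X 0 k i) (X 0 k i); rewrite subrK /E; lra.
have [om [om0 hom]] := mxbound_ex Om.
have [g [g0 hg]] := mxbound_ex G^T.
pose Bw := p%:R * (om * E).
pose C := 2 * (n%:R * (p%:R * ((p%:R * ((n%:R * (K * M)) * g)) * Bw))) +
          n%:R * (p%:R * ((p%:R * (M * om)) * M)).
exists C => a b a0 ab bT.
set h := b - a.
have h0 : 0 <= h by rewrite /h subr_ge0.
have aT : a <= T by exact: le_trans bT.
have b0 : 0 <= b by exact: le_trans ab.
pose Xa := X a.
pose D := X b - Xa.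
pose F0 := fun s => Q s *m Xa *m G^T.
pose Fe := fun s => F s - F0 s.
have hF : forall k i, Iex (fun s => F s k i) a b.
  by move=> k i; case: (incr_X r hG hx a0 ab k i).
have hF0 : forall k i, Iex (fun s => F0 s k i) a b.
  move=> k i.
  have -> : (fun s => F0 s k i) = fun s => \sum_j Q s k j * (Xa *m G^T) j i.
    by apply/funext => s; rewrite /F0 -mulmxA mxE.
  apply: Iex_lin => j l; apply: (Iex_sub_int (a:=0) (b:=T)) => //.
  exact: hQint.
have hFe : forall k i, Iex (fun s => Fe s k i) a b.
  move=> k i.
  have -> : (fun s => Fe s k i) = fun s => F s k i - F0 s k i by apply/funext => s; rewrite !mxE.
  exact: Iex_sub.
have eD : D = MIv F0 a b + MIv Fe a b.
  apply/matrixP => k i; rewrite mxE_add /MIv !mxE.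
  have [_ e] := incr_X r hG hx a0 ab k i.
  have -> : (fun s => Fe s k i) = fun s => F s k i - F0 s k i by apply/funext => s; rewrite /Fe mxE_sub.
  rewrite Iv_sub // /F -e !mxE; lra.
have DM : mxbound D (h * M) by exact: incr.
have XaE : mxbound Xa E by apply: XE; rewrite a0 aT.
have Feb : mxbound (MIv Fe a b) (h * (p%:R * ((n%:R * (K * (M * h))) * g))).
  move=> k i; rewrite mxE; apply: Iv_bound => // s /andP [h1 h2].
  have -> : Fe s k i = (Q s *m (X s - Xa) *m G^T) k i.
    by rewrite /Fe /F /F0 /Fm -mulmxBl -mulmxBr !mxE.
  apply: mxbound_mul => //; apply: mxbound_mul.
    by apply: QK; rewrite (le_trans a0 h1) (le_trans h2 bT).
  move=> k' i'; apply: le_trans (incr a s a0 h1 (le_trans h2 bT) k' i') _.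
  rewrite mulrC; apply: ler_wpM2l => //; rewrite /h lerD2r //.
have WB : mxbound (Om *m Xa^T) Bw by apply: mxbound_mul => //; exact: mxbound_trmx.
have Xa_r : Xa *m r = 0 by exact: (Xr0 hG hx hr1 hr2 a0).
have [hint eint] := tr_Iv (Om *m Xa^T) hF0.
have main : \tr (MIv F0 a b *m (Om *m Xa^T)) <= 0.
  rewrite eint; apply: Iv_le0 => // s /andP [h1 h2].
  have s0 : 0 <= s by exact: le_trans h1.
  have := lyap_pt sO (hQpsd s s0) Xa_r hL.
  have := tr_psd Xa (hQpsd s s0).
  rewrite /F0; lra.
have e1 : Vf Om x r b - Vf Om x r a =
    2 * \tr (MIv F0 a b *m (Om *m Xa^T)) + 2 * \tr (MIv Fe a b *m (Om *m Xa^T)) +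
    \tr (D *m Om *m D^T).
  rewrite /Vf -/X.
  have -> : X b = Xa + D by rewrite /D addrC subrK.
  by rewrite V_expand // {1}eD mulmxDl mxtraceD mulrDr.
have b1 := mxbound_tr (mxbound_mul Feb WB).
have b2 := mxbound_tr (mxbound_mul (mxbound_mul DM hom) (mxbound_trmx DM)).
have := ler_norm (\tr (MIv Fe a b *m (Om *m Xa^T))).
have := ler_norm (\tr (D *m Om *m D^T)).
have -> : C * h ^+ 2 = 2 * (n%:R * (p%:R * (h * (p%:R * (n%:R * (K * (M * h)) * g)) * Bw))) +
    n%:R * (p%:R * (p%:R * (h * M * om) * (h * M))).
  by rewrite /C; ring.
rewrite e1; lra.
Qed.

Lemma small_le0 (d c : R) : (forall N : nat, d <= c / N.+1%:R) -> d <= 0.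
Proof.
move=> h; have [c0|c0] := leP c 0.
  by apply: le_trans (h 0%N) _; rewrite divr1.
have {c0} c0 := ltW c0.
rewrite leNgt; apply/negP => d0.
have := truncnS_gt (c / d); set N := Num.truncn (c / d) => hN.
have := h N; rewrite ler_pdivlMr ?ltr0Sn // => h2.
move: hN; rewrite ltr_pdivrMr // => h3.
have : d * N.+1%:R <= c by [].
nra.
Qed.

Lemma V_mono p n (G : 'M[R]_p) (r : 'cV[R]_p) (Om : 'M[R]_p) (Q : R -> 'M[R]_n) x :
  is_interconnection G -> is_solution G Q x ->
  r^T *m G = 0 -> r^T *m const_mx 1 = 1 -> Om^T = Om ->
  (G - const_mx 1 *m r^T)^T *m Om + Om *m (G - const_mx 1 *m r^T) = - 1%:M ->
  riemann_int_psd Q ->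
  forall t, 0 <= t -> Vf Om x r t <= Vf Om x r 0.
Proof.
move=> hG hx hr1 hr2 sO hL hQ t t0.
have [C hC] := local_est hG hx hr1 hr2 sO hL hQ t0.
rewrite -subr_ge0 -[X in 0 <= X]opprK oppr_ge0 opprB.
apply: (@small_le0 _ (C * t ^+ 2)).
move=> N; set h := t / N.+1%:R.
have Np : 0 < N.+1%:R :> R by rewrite ltr0Sn.
have h0 : 0 <= h by apply: divr_ge0 => //; exact: ltW.
have key : forall m, (m <= N.+1)%N -> Vf Om x r (m%:R * h) - Vf Om x r 0 <= m%:R * C * h ^+ 2.
  elim => [|m IH] hm; first by rewrite mulr0n !mul0r subrr.
  have hm' : (m <= N.+1)%N by apply: ltnW.
  have := IH hm'.
  have bT : m.+1%:R * h <= t.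
    rewrite /h mulrA ler_pdivrMr // mulrC ler_wpM2l //.
    by rewrite ler_nat.
  have := hC (m%:R * h) (m.+1%:R * h).
  have a0 : 0 <= m%:R * h by apply: mulr_ge0 => //; exact: ler0n.
  have ab : m%:R * h <= m.+1%:R * h by apply: ler_wpM2r => //; rewrite ler_nat.
  move=> /(_ a0 ab bT).
  have -> : m.+1%:R * h - m%:R * h = h by rewrite -mulrBl -natrB // subSnn mul1r.
  rewrite mulrS.
  nra.
have := key N.+1 (leqnn _).
have -> : N.+1%:R * h = t by rewrite /h mulrC divfK // gt_eqF.
have -> : N.+1%:R * C * h ^+ 2 = C * t ^+ 2 / N.+1%:R.
  rewrite /h; field; rewrite -mulrS; exact: lt0r_neq0.
exact: id.
Qed.

Lemma Vf_rows p n (Om : 'M[R]_p) (X : 'M[R]_(n, p)) :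
  \tr (X *m Om *m X^T) = \sum_k qf Om (row k X).
Proof.
rewrite /mxtrace; apply: eq_bigr => k _; rewrite /qf !mxE; apply: eq_bigr => j _.
rewrite !mxE; congr (_ * _); apply: eq_bigr => l _; rewrite !mxE //.
Qed.

Lemma nsq_row n p (X : 'M[R]_(n, p)) k : nsq (row k X) = \sum_j X k j ^+ 2.
Proof. by rewrite nsqE; apply: eq_bigr => j _; rewrite mxE. Qed.

Theorem theorem2 (p n : nat) (G : 'M[R]_p) (r : 'cV[R]_p) (Om : 'M[R]_p)
  (HG : is_interconnection G) (Hconn : connected_graph G)
  (Hr1 : r^T *m G = 0) (Hr2 : r^T *m const_mx 1 = 1)
  (HOm : pd Om)
  (HLyap : (G - const_mx 1 *m r^T)^T *m Om + Om *m (G - const_mx 1 *m r^T) = - 1%:M)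
  (Q : R -> 'M[R]_n) (HQ : riemann_int_psd Q)
  (x : R -> 'I_p -> 'cV[R]_n) (Hx : is_solution G Q x) :
  forall (t : R), 0 <= t -> forall i : 'I_p,
    vnorm (x t i - xbar r (x 0)) <=
    Num.sqrt (sigma_max Om / sigma_min Om *
              \sum_(j < p) vnorm (x 0 j - xbar r (x 0)) ^+ 2).
Proof.
move=> t t0 i.
have p0 : (0 < p)%N by exact: leq_ltn_trans (leq0n i) (ltn_ord i).
have sO : Om^T = Om by case: HOm.
have [smin0 hmin hmax] := spectral_bounds p0 HOm.
have hV := V_mono HG Hx Hr1 Hr2 sO HLyap HQ t0.
pose St := \sum_k nsq (row k (Xm x r t)).
pose S0 := \sum_k nsq (row k (Xm x r 0)).
have h1 : sigma_min Om * St <= Vf Om x r t.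
  rewrite /Vf Vf_rows /St big_distrr /=; apply: ler_sum => k _; exact: hmin.
have h2 : Vf Om x r 0 <= sigma_max Om * S0.
  rewrite /Vf Vf_rows /S0 big_distrr /=; apply: ler_sum => k _; exact: hmax.
have h3 : \sum_k Xm x r t k i ^+ 2 <= St.
  rewrite /St; apply: ler_sum => k _; rewrite nsq_row (bigD1 i) //= lerDl.
  by apply: sumr_ge0 => j _; exact: sqr_ge0.
have h4 : \sum_(j < p) vnorm (x 0 j - xbar r (x 0)) ^+ 2 = S0.
  rewrite /S0 (eq_bigr (fun k => \sum_j Xm x r 0 k j ^+ 2)); last by move=> k _; rewrite nsq_row.
  rewrite exchange_big /=; apply: eq_bigr => j _.
  rewrite /vnorm sqr_sqrtr; last by apply: sumr_ge0 => k _; exact: sqr_ge0.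
  by apply: eq_bigr => k _; rewrite !mxE.
have -> : vnorm (x t i - xbar r (x 0)) = Num.sqrt (\sum_k Xm x r t k i ^+ 2).
  by rewrite /vnorm; congr Num.sqrt; apply: eq_bigr => k _; rewrite !mxE.
rewrite h4; apply: ler_wsqrtr.
rewrite mulrAC ler_pdivlMr //.
have St0 : 0 <= St by apply: sumr_ge0 => k _; exact: nsq_ge0.
nra.
Qed.
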